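(* The counter graph $\mathbb{C}(\lambda^* )$ has size $|\mathbb{C}(\lambda^* )|=|V|\cdot2^{|\Pi|}\cdot(\mathrm{mR}(\lambda^* )+2)^{|\Pi|}$, which is exponential in the size of the game $\mathcal{G}$ (i.e., bounded by $2^{p}$ for some polynomial $p$ in the size of $\mathcal{G}$).
   Context: Let $\mathcal{G}$ be a quantitative reachability game on an arena $G=(\Pi,V,(V_i)_{i\in\Pi},E)$ (finite player set $\Pi$, finite vertex set $V$ with $|V|\ge2$, $|\Pi|\le|V|$, partition $(V_i)$, every vertex has a successor) with targets $F_i\subseteq V$ and costs $\mathrm{Cost}_i(\rho)=$ least $k$ with $\rho_k\in F_i$ (or $+\infty$); $v_0\in V$. Extended game: arena $X$ with vertices $V^X=V\times2^\Pi$, edges $((v,I),(v',I'))\in E^X$ iff $(v,v')\in E$ and $I'=I\cup\{i:v'\in F_i\}$, $(v,I)\in V^X_i$ iff $v\in V_i$, targets $F^X_i=\{(v,I):i\in I\}$ with corresponding costs; $x_0=(v_0,\{i:v_0\in F_i\})$; $I(u)$ is the second component. $\mathcal{I}$ is the set of $I$ with some $(v,I)$ reachable from $x_0$, $N=|\mathcal{I}|$, $J_1<\dots<J_N$ a fixed total order of $\mathcal{I}$ extending $I<I'$ iff $I\ne I'$ and some $(v',I')$ is reachable from some $(v,I)$. $V^{\ge J_n}=\{(v,J_m):v\in V,m\ge n\}$. Labelings: for $\lambda:V^X\to\mathbb{N}\cup\{+\infty\}$, a play $\rho$ of $X$ is $\lambda$-consistent if $\mathrm{Cost}_i(\rho_{\ge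 n})\le\lambda(\rho_n)$ whenever $\rho_n\in V^X_i$. $\lambda^0(u)=0$ if $u\in V^X_i$ and $i\in I(u)$, else $+\infty$. The update of $\lambda^k$ w.r.t. $V^{\ge J_n}$ keeps values outside $V^{\ge J_n}$ and for $u\in V^{\ge J_n}\cap V^X_i$ sets $\lambda^{k+1}(u)=0$ if $i\in I(u)$, otherwise $1+\min_{(u,u')\in E^X}\sup\{\mathrm{Cost}_i(\rho):\rho$ a $\lambda^k$-consistent play from $u'\}$ ($1+(+\infty)=+\infty$). The sequence is generated by $n_0=N$, $\lambda^{k+1}=$ update of $\lambda^k$ w.r.t. $V^{\ge J_{n_k}}$, $n_{k+1}=n_k-1$ if $\lambda^{k+1}=\lambda^k$ and $n_k>1$, else $n_{k+1}=n_k$; it eventually becomes constant, equal to $\lambda^*$. $\mathrm{mR}(\lambda)$ is the maximum of the finite values of $\lambda$ ($0$ if none). Counter graph $\mathbb{C}(\lambda)$: with $K=\mathrm{mR}(\lambda)$, $\mathcal{K}=\{0,\dots,K\}\cup\{+\infty\}$, its vertex set is $V^X\times\mathcal{K}^\Pi$, with an edge from $(u,(c_i)_i)$ to $(u',(c'_i)_i)$ iff $(u,u')\in E^X$ and for every $i$: either $i\in I(u')$ and $c'_i=0$; or $i\notin I(u')$, $u'\notin V^X_i$, $c_i>1$, $c'_i=c_i-1$; or $i\notin I(u')$, $u'\in V^X_i$, $c_i>1$, $c'_i=\min(c_i-1,\lambda(u'))$. Its size is its number of vertices. *)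

(* Defs.v *)
From HB Require Import structures.
From mathcomp Require Import all_boot.
From Stdlib Require Import ClassicalEpsilon.
Set Implicit Arguments. Unset Strict Implicit. Unset Printing Implicit Defensive.

(* Extended naturals N u {+oo}: [Some n] is n, [None] is +oo. *)
Definition enat := option nat.
Definition ele (x y : enat) : bool :=
  match x, y with
  | _, None => true
  | None, Some _ => false
  | Some a, Some b => a <= b
  end.
Definition eadd1 (x : enat) : enat := omap S x.
Definition esub1 (x : enat) : enat := omap predn x.
Definition egt1 (x : enat) : bool := if x is Some n then 1 < n else true.
Definition emin (x y : enat) : enat := if ele x y then x else y.

Definition is_lub (S : enat -> Prop) (s : enat) :=
  (forall x, S x -> ele x s) /\ (forall b, (forall x, S x -> ele x b) -> ele s b).
Definition is_glb (S : enat -> Prop) (s : enat) :=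
  (forall x, S x -> ele s x) /\ (forall b, (forall x, S x -> ele b x) -> ele b s).
Definition esup (S : enat -> Prop) : enat := epsilon (inhabits None) (is_lub S).
Definition einf (S : enat -> Prop) : enat := epsilon (inhabits None) (is_glb S).

Section Game.
Variables (Pi V : finType) (own : V -> Pi) (E : rel V) (F : Pi -> {set V}) (v0 : V).

Local Notation VX := (V * {set Pi})%type.

Definition targets_of (v : V) : {set Pi} := [set i | v \in F i].

Definition EX : rel VX := fun u u' => E u.1 u'.1 && (u'.2 == u.2 :|: targets_of u'.1).
Definition ownX (u : VX) : Pi := own u.1.
Definition x0 : VX := (v0, targets_of v0).

Definition is_play (r : nat -> VX) : Prop := forall n, EX (r n) (r n.+1).

Definition costX (i : Pi) (r : nat -> VX) : enat :=
  epsilon (inhabits None) (fun c => match c with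
    | Some k => i \in (r k).2 /\ forall j, j < k -> i \notin (r j).2
    | None => forall k, i \notin (r k).2
    end).

Definition suffix (r : nat -> VX) (n : nat) : nat -> VX := fun k => r (n + k).

Definition consistent (lam : VX -> enat) (r : nat -> VX) : Prop :=
  forall n, ele (costX (ownX (r n)) (suffix r n)) (lam (r n)).

Definition lam0 (u : VX) : enat := if ownX u \in u.2 then Some 0 else None.

Definition calI : {set {set Pi}} := [set I | [exists v, connect EX x0 (v, I)]].

Definition reach_lt (I I' : {set Pi}) : bool :=
  (I != I') && [exists v, [exists v', connect EX (v, I) (v', I')]].

Definition valid_order (Js : seq {set Pi}) : Prop :=
  [/\ uniq Js, (forall I, (I \in Js) = (I \in calI)) &
      (forall m n, m < size Js -> n < size Js ->
         reach_lt (nth set0 Js m) (nth set0 Js n) -> m < n)].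

Variable Js : seq {set Pi}.

(* u \in V^{>= J_n}  (n is 1-based as in the paper) *)
Definition inGe (n : nat) (u : VX) : bool := (u.2 \in Js) && (n <= (index u.2 Js).+1).

Definition upd (lam : VX -> enat) (n : nat) (u : VX) : enat :=
  if inGe n u then
    if ownX u \in u.2 then Some 0
    else eadd1 (einf (fun c => exists u', EX u u' /\
           c = esup (fun d => exists r, [/\ is_play r, r 0 = u', consistent lam r &
                                           d = costX (ownX u) r])))
  else lam u.

Fixpoint state (k : nat) : (VX -> enat) * nat :=
  match k with
  | 0 => (lam0, size Js)
  | k'.+1 =>
      let (lam, n) := state k' in
      let lam' := upd lam n in
      (lam', if [forall u, lam' u == lam u] && (1 < n) then n.-1 else n)
  end.

Definition lam_k (k : nat) : VX -> enat := (state k).1.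

Definition sizeG : nat :=
  #|V| + #|Pi| + #|[set e : V * V | E e.1 e.2]| + \sum_(i : Pi) #|F i|.

End Game.

Section Counter.
Variables (Pi V : finType) (own : V -> Pi) (E : rel V) (F : Pi -> {set V}).
Local Notation VX := (V * {set Pi})%type.

Definition mR (lam : VX -> enat) : nat :=
  \max_(u : VX) (if lam u is Some n then n else 0).

Definition cval (K : nat) (c : option 'I_K) : enat := omap (@nat_of_ord K) c.

(* vertices of the counter graph C(lam): V^X x ({0..K} u {+oo})^Pi, K = mR lam *)
Definition CVert (lam : VX -> enat) := (VX * {ffun Pi -> option 'I_(mR lam).+1})%type.

Definition counter_edge (lam : VX -> enat) (x y : CVert lam) : Prop :=
  EX E F x.1 y.1 /\
  forall i : Pi,
    let c := cval (x.2 i) in let c' := cval (y.2 i) in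
    [\/ i \in y.1.2 /\ c' = Some 0,
        [/\ i \notin y.1.2, ownX own y.1 != i, egt1 c & c' = esub1 c]
      | [/\ i \notin y.1.2, ownX own y.1 == i, egt1 c & c' = emin (esub1 c) (lam y.1)]].

Definition csize (lam : VX -> enat) : nat := #|{: CVert lam}|.
End Counter.

(* Main.v *)
Require Import Defs.
From HB Require Import structures.
From mathcomp Require Import all_boot zify.
From Stdlib Require Import ClassicalEpsilon.
Set Implicit Arguments. Unset Strict Implicit. Unset Printing Implicit Defensive.

Lemma exists_least (P : nat -> Prop) n : P n -> exists m, P m /\ forall k, P k -> m <= k.
Proof.
move=> Pn.
pose p := fun k => if excluded_middle_informative (P k) then true else false.
have pP k : reflect (P k) (p k).
  rewrite /p; case: excluded_middle_informative => H; [exact: ReflectT|exact: ReflectF].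
have ex : exists k, p k by exists n; apply/pP.
case: (ex_minnP ex) => m /pP Pm Hm; exists m; split=> // k /pP; exact: Hm.
Qed.

Lemma ele_refl x : ele x x. Proof. by case: x => //= n. Qed.
Lemma ele_None x : ele x None. Proof. by case: x. Qed.
Lemma ele_trans x y z : ele x y -> ele y z -> ele x z.
Proof. case: x; case: y; case: z => //= a b c; exact: leq_trans. Qed.

Lemma lub_exists S : exists s, is_lub S s.
Proof.
case: (classic (exists n, forall x, S x -> ele x (Some n))) => [[n Hn]|Hnb].
  have [m [Pm Hm]] := exists_least (P := fun n => forall x, S x -> ele x (Some n)) Hn.
  exists (Some m); split => // [[b|]] Hb //=; exact: Hm.
exists None; split => [x _|[b|] Hb //]; first exact: ele_None.
by case: Hnb; exists b.
Qed.

Lemma glb_exists S : exists s, is_glb S s.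
Proof.
case: (classic (exists n, S (Some n))) => [[n Hn]|Hn].
  have [m [Pm Hm]] := exists_least (P := fun k => S (Some k)) Hn.
  exists (Some m); split => [[x|] Sx //=|b Hb]; first exact: Hm.
  exact: Hb.
exists None; split => [[x|] Sx //=|b Hb]; last exact: ele_None.
by case: Hn; exists x.
Qed.

Lemma esupP S : is_lub S (esup S).
Proof.
rewrite /esup; case: (epsilon_spec (inhabits None) (is_lub S)) => //.
exact: lub_exists.
Qed.

Lemma einfP S : is_glb S (einf S).
Proof.
rewrite /einf; case: (epsilon_spec (inhabits None) (is_glb S)) => //.
exact: glb_exists.
Qed.

Lemma esup_attained S m : esup S = Some m.+1 -> S (Some m.+1).
Proof.
move=> Hs; have [ub lub] := esupP S; rewrite Hs in ub lub.
apply: NNPP => HS.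
have : ele (Some m.+1) (Some m).
  apply: lub => [[x|] Sx] //=; last by have := ub _ Sx.
  have := ub _ Sx; rewrite /= leq_eqVlt => /orP[/eqP E|//].
  by subst x.
by rewrite /= ltnn.
Qed.

Lemma einf_attained S m : einf S = Some m -> S (Some m).
Proof.
move=> Hs; have [lb glb] := einfP S; rewrite Hs in lb glb.
apply: NNPP => HS.
have : ele (Some m.+1) (Some m).
  apply: glb => [[x|] Sx] //=.
  have := lb _ Sx; rewrite /= leq_eqVlt => /orP[/eqP E|//].
  by subst x.
by rewrite /= ltnn.
Qed.
Section Plays.
Variables (Pi V : finType) (own : V -> Pi) (E : rel V) (F : Pi -> {set V}).
Local Notation VX := (V * {set Pi})%type.

Lemma costX_spec i (r : nat -> VX) :
  match costX i r with
  | Some k => i \in (r k).2 /\ forall j, j < k -> i \notin (r j).2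
  | None => forall k, i \notin (r k).2 end.
Proof.
rewrite /costX.
set P := (fun c : enat => _).
suff : exists c, P c by move/(epsilon_spec (inhabits None)).
case: (classic (exists k, i \in (r k).2)) => [[k Hk]|Hn].
  have [m [Pm Hm]] := exists_least (P := fun k => i \in (r k).2) Hk.
  exists (Some m); split => // j Hj; apply/negP => Hj'.
  by have := Hm _ Hj'; rewrite leqNgt Hj.
exists None => k; apply/negP => Hk; apply: Hn; by exists k.
Qed.

Lemma costX_Some i (r : nat -> VX) k :
  i \in (r k).2 -> (forall j, j < k -> i \notin (r j).2) -> costX i r = Some k.
Proof.
move=> Hk Hj; have := costX_spec i r; case: (costX i r) => [c [Hc Hc']|H].
  congr Some; apply/eqP; rewrite eqn_leq; apply/andP; split; rewrite leqNgt; apply/negP.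
    by move/Hc'; rewrite Hk.
  by move/Hj; rewrite Hc.
by have := H k; rewrite Hk.
Qed.

Lemma costX_le i (r : nat -> VX) k :
  i \in (r k).2 -> exists c, costX i r = Some c /\ c <= k.
Proof.
move=> Hk; have := costX_spec i r; case: (costX i r) => [c [Hc Hc']|H].
  exists c; split => //; rewrite leqNgt; apply/negP; by move/Hc'; rewrite Hk.
by have := H k; rewrite Hk.
Qed.

Lemma play_mono (r : nat -> VX) m n : is_play E F r -> m <= n -> (r m).2 \subset (r n).2.
Proof.
move=> Hr /subnK <-; elim: (n - m) => [|k IH] //=.
apply: subset_trans IH _; have := Hr (k + m); rewrite /EX => /andP[_ /eqP ->].
by rewrite subsetUl.
Qed.

Lemma play_memI (r : nat -> VX) m n i : is_play E F r -> m <= n -> i \in (r m).2 -> i \in (r n).2.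
Proof. move=> Hr Hmn; exact: (subsetP (play_mono Hr Hmn)). Qed.

Lemma costX_agree i (r r' : nat -> VX) c :
  costX i r = Some c -> (forall t, t <= c -> r' t = r t) -> costX i r' = Some c.
Proof.
move=> Hc Ht; have := costX_spec i r; rewrite Hc => -[H1 H2].
apply: costX_Some; first by rewrite Ht.
move=> j Hj; rewrite Ht ?(ltnW Hj) //; exact: H2.
Qed.

End Plays.
Section Pump.
Variables (Pi V : finType) (own : V -> Pi) (E : rel V) (F : Pi -> {set V}).
Local Notation VX := (V * {set Pi})%type.

Lemma costX_ext i (r r' : nat -> VX) : (forall t, r' t = r t) -> costX i r' = costX i r.
Proof.
move=> Ht; have := costX_spec i r; case Hc: (costX i r) => [c|] H.
  by apply: (costX_agree Hc) => t _.
have := costX_spec i r'; case: (costX i r') => [c [Hc' _]|//].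
by have := H c; rewrite -Ht Hc'.
Qed.

Definition blocked (lam : VX -> enat) (r : nat -> VX) p :=
  exists n, [/\ n <= p, lam (r n) <> None & ownX own (r n) \notin (r p).2].

Definition pump (r : nat -> VX) a b : nat -> VX :=
  fun m => if m < b then r m else r (m - (b - a)).

Lemma pump_play r a b : is_play E F r -> a < b -> r a = r b -> is_play E F (pump r a b).
Proof.
move=> Hr ab rab m; rewrite /pump.
case: (ltnP m.+1 b) => H1.
  by rewrite (ltnW H1); exact: Hr.
case: (ltnP m b) => H2.
  have eb : m.+1 = b by lia.
  have -> : m.+1 - (b - a) = a by lia.
  rewrite rab -eb; exact: Hr.
have -> : m.+1 - (b - a) = (m - (b - a)).+1 by lia.
exact: Hr.
Qed.

Lemma pump0 r a b : a < b -> pump r a b 0 = r 0.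
Proof. move=> ab; rewrite /pump; have -> : 0 < b by lia. by []. Qed.

Lemma pump_cost r a b i d : costX i r = Some d -> a < b -> b < d ->
  costX i (pump r a b) = Some (d + (b - a)).
Proof.
move=> Hc ab bd; have := costX_spec i r; rewrite Hc => -[H1 H2].
apply: costX_Some; rewrite /pump.
  have -> : (d + (b - a) < b) = false by lia.
  by have -> : d + (b - a) - (b - a) = d by lia.
move=> j Hj; case: ifP => Hjb; first by apply: H2; lia.
apply: H2; lia.
Qed.

Lemma pump_consistent lam r a b : is_play E F r -> consistent own lam r -> a < b -> r a = r b ->
  (forall p, a <= p -> p < b -> ~ blocked lam r p) -> consistent own lam (pump r a b).
Proof.
move=> Hr Hc ab rab Hnb n; rewrite /suffix.
case: (ltnP n b) => nb; last first.
  have e : pump r a b n = r (n - (b - a)) by rewrite /pump ltnNge nb.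
  rewrite e; move: (Hc (n - (b - a))); rewrite /suffix.
  suff -> : costX (ownX own (r (n - (b - a)))) (fun k => pump r a b (n + k)) =
            costX (ownX own (r (n - (b - a)))) (fun k => r (n - (b - a) + k)) by [].
  apply: costX_ext => t; rewrite /pump ltnNge (leq_trans nb (leq_addr _ _)) /=; congr r; lia.
have e : pump r a b n = r n by rewrite /pump nb.
rewrite e; move: (Hc n); rewrite /suffix.
set j := ownX own (r n).
case Hl: (lam (r n)) => [x|]; last by move=> _; apply: ele_None.
case: (boolP (j \in (r n).2)) => Hj.
  rewrite (@costX_Some _ _ j (fun k => pump r a b (n + k)) 0) //; first by rewrite addn0 e.
case: (ltnP n a) => na; last first.
  by case: (Hnb n na nb); exists n; split => //; rewrite Hl.
have ja : j \in (r a).2.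
  apply: NNPP => Hja; apply: (Hnb a (leqnn a) ab); exists n; split => //.
    exact: ltnW. by rewrite Hl. by apply/negP.
have ha : j \in ((fun k => r (n + k)) (a - n)).2 by rewrite /= subnKC // ltnW.
have [c [Hcs cle]] := @costX_le _ _ j (fun k => r (n + k)) (a - n) ha.
rewrite Hcs => Hle.
rewrite (@costX_agree _ _ j (fun k => r (n + k)) _ c) // => t Ht.
rewrite /Defs.suffix /pump ifT //; lia.
Qed.

End Pump.
Section Bound.
Variables (Pi V : finType) (own : V -> Pi) (E : rel V) (F : Pi -> {set V}).
Local Notation VX := (V * {set Pi})%type.

Lemma progress lam (r : nat -> VX) W p :
  is_play E F r -> consistent own lam r ->
  (forall m y, lam (r m) = Some y -> y <= W) ->
  (r p).2 = (r (p + (#|V| + 2 * W))).2 ->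
  exists a b, [/\ p <= a, a < b, b <= p + (#|V| + 2 * W), r a = r b &
                  forall q, a <= q -> q < b -> ~ blocked own lam r q].
Proof.
move=> Hr Hc HW Hp.
set L := #|V| + 2 * W in Hp *.
have lev x : p <= x -> x <= p + L -> (r x).2 = (r p).2.
  move=> h1 h2; apply/eqP; rewrite eqEsubset (play_mono Hr h1) andbT Hp; exact: play_mono.
set s := p + W.
have unb x : s <= x -> x <= s + #|V| -> ~ blocked own lam r x.
  move=> h1 h2 [n [nx Hl Hj]].
  move: (Hc n); rewrite /suffix; case Hln: (lam (r n)) => [l|]; last by rewrite Hln in Hl.
  have := costX_spec (ownX own (r n)) (fun k => r (n + k)).
  case: (costX _ _) => [c [Hc1 _]|] //= cl.
  have lW := HW _ _ Hln.
  have Hnc : x < n + c.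
    rewrite ltnNge; apply/negP => ncx; move/negP: Hj; apply.
    exact: (play_memI Hr ncx Hc1).
  case: (ltnP n p) => np.
    have : x < s by rewrite /s; lia.
    by rewrite ltnNge h1.
  move/negP: Hj; apply.
  have : ownX own (r n) \in (r (p + L)).2 by apply: (play_memI Hr _ Hc1); rewrite /L; lia.
  rewrite -Hp -(lev x) //; first by lia.
  rewrite /L; lia.
pose f := fun k : 'I_(#|V|.+1) => (r (s + k)).1.
have [k1 [k2 [k12 fk]]] : exists k1 k2 : 'I_(#|V|.+1), k1 < k2 /\ f k1 = f k2.
  apply: NNPP => Hn.
  have : injective f.
    move=> k1 k2 fk; apply: val_inj => /=; apply/eqP; rewrite eqn_leq; apply/andP; split;
      rewrite leqNgt; apply/negP => H; apply: Hn.
      by exists k2, k1.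
    by exists k1, k2.
  by move/leq_card; rewrite card_ord ltnn.
have k2V := ltn_ord k2.
exists (s + k1), (s + k2); split.
- by rewrite /s; lia.
- by rewrite ltn_add2l.
- rewrite /s /L; lia.
- move: fk; rewrite /f; case E1: (r (s + k1)) => [v1 I1]; case E2: (r (s + k2)) => [v2 I2] /= ->.
  have e1 : I1 = (r p).2 by rewrite -(lev (s + k1)) ?E1 // /s /L; lia.
  have e2 : I2 = (r p).2 by rewrite -(lev (s + k2)) ?E2 // /s /L; lia.
  by rewrite e1 e2.
- move=> q h1 h2; apply: unb; lia.
Qed.

Lemma cost_bound lam (r : nat -> VX) W i d :
  is_play E F r -> consistent own lam r -> costX i r = Some d ->
  (forall m y, lam (r m) = Some y -> y <= W) ->
  (forall r', is_play E F r' -> r' 0 = r 0 -> consistent own lam r' -> ele (costX i r') (Some d)) ->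
  d <= #|Pi| * (#|V| + 2 * W).
Proof.
move=> Hr Hc Hd HW Hmax.
set L := #|V| + 2 * W.
rewrite leqNgt; apply/negP => Hlt.
have [Hi Hi'] : i \in (r d).2 /\ forall j, j < d -> i \notin (r j).2 by have := costX_spec i r; rewrite Hd.
have step s : s < #|Pi| -> (r (s * L)).2 \proper (r (s.+1 * L)).2.
  move=> sP; rewrite properEneq (play_mono Hr) ?andbT; last by rewrite leq_mul2r leqnSn orbT.
  apply/negP => /eqP Heq.
  have HeqL : (r (s * L)).2 = (r (s * L + (#|V| + 2 * W))).2 by rewrite Heq mulSn addnC.
  have [a [b [h1 h2 h3 rab Hnb]]] := progress Hr Hc HW HeqL.
  have bd : b < d.
    apply: leq_ltn_trans Hlt; apply: leq_trans h3 _.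
    have : s.+1 * L <= #|Pi| * L by rewrite leq_mul2r sP orbT.
    rewrite mulSn /L; lia.
  have := Hmax _ (pump_play Hr h2 rab) (pump0 _ h2) (pump_consistent Hr Hc h2 rab Hnb).
  rewrite (pump_cost Hd h2 bd) /=; lia.
have card s : s <= #|Pi| -> s <= #|(r (s * L)).2|.
  elim: s => [|s IH] // sP.
  have := proper_card (step s sP); have := IH (ltnW sP); lia.
have := card _ (leqnn #|Pi|).
have : (r (#|Pi| * L)).2 \proper [set: Pi].
  apply/properP; split; first exact: subsetT.
  exists i; first by rewrite inE.
  by apply: Hi'.
move/proper_card; rewrite cardsT; lia.
Qed.
End Bound.
Section Seq.
Variables (Pi V : finType) (own : V -> Pi) (E : rel V) (F : Pi -> {set V}) (Js : seq {set Pi}).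
Local Notation VX := (V * {set Pi})%type.

Lemma upd_bound lam n (u : VX) v (W : nat) :
  inGe Js n u -> ownX own u \notin u.2 -> upd own E F Js lam n u = Some v ->
  (forall (w : VX) y, u.2 \subset w.2 -> lam w = Some y -> y <= W) ->
  v <= 1 + #|Pi| * (#|V| + 2 * W).
Proof.
move=> Hg Ho; rewrite /upd Hg (negbTE Ho).
case He: (einf _) => [e|] //= [<-] HW.
have [u' [Hu' Hs]] := einf_attained He.
case: e Hs {He} => [|e] Hs; first by [].
have [r [Hr r0 Hc Hcost]] := esup_attained (esym Hs).
rewrite add1n ltnS.
apply: (@cost_bound _ _ own E F lam r W (ownX own u)) => //.
- move=> m y Hy; apply: (HW (r m)) Hy.
  apply: subset_trans (play_mono Hr (leq0n m)); rewrite r0.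
  by move: Hu'; rewrite /EX => /andP[_ /eqP ->]; rewrite subsetUl.
- move=> r' Hr' r'0 Hc'; have [ub _] := esupP (fun d => exists r, [/\ is_play E F r, r 0 = u',
      consistent own lam r & d = costX (ownX own u) r]).
  rewrite -Hs in ub; apply: ub; exists r'; split => //; by rewrite r'0.
Qed.

Lemma eadd1_mono x y : ele x y -> ele (eadd1 x) (eadd1 y).
Proof. by case: x; case: y. Qed.

Lemma esup_mono (S S' : enat -> Prop) : (forall x, S x -> S' x) -> ele (esup S) (esup S').
Proof.
move=> H; have [ub _] := esupP S'; have [_ lub] := esupP S.
apply: lub => x Sx; apply: ub; exact: H.
Qed.

Lemma einf_mono (S S' : enat -> Prop) :
  (forall x', S' x' -> exists x, S x /\ ele x x') -> ele (einf S) (einf S').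
Proof.
move=> H; have [_ glb] := einfP S'; have [lb _] := einfP S.
apply: glb => x' Sx'; have [x [Sx le]] := H _ Sx'.
apply: ele_trans le; exact: lb.
Qed.

Lemma upd_mono lam lam' n (u : VX) :
  (forall w, ele (lam w) (lam' w)) ->
  ele (upd own E F Js lam n u) (upd own E F Js lam' n u).
Proof.
move=> Hl; rewrite /upd; case: ifP => _; last exact: Hl.
case: ifP => _; first by [].
apply: eadd1_mono; apply: einf_mono => x' [u' [Hu' ->]].
eexists; split; first by exists u'; split; [exact: Hu'|reflexivity].
apply: esup_mono => d [r [H1 H2 H3 H4]]; exists r; split => // m.
apply: ele_trans (H3 m) (Hl _).
Qed.

Lemma lamS k : lam_k own E F Js k.+1 = upd own E F Js (lam_k own E F Js k) (state own E F Js k).2.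
Proof. by rewrite /lam_k /=; case: (state own E F Js k). Qed.

Lemma nS k : (state own E F Js k.+1).2 <= (state own E F Js k).2.
Proof.
rewrite /=; case: (state own E F Js k) => l n /=; case: ifP => //= /andP[_ _]; exact: leq_pred.
Qed.

Lemma inGe_mono n m (u : VX) : n <= m -> inGe Js m u -> inGe Js n u.
Proof. rewrite /inGe => nm /andP[-> h] /=; exact: leq_trans nm h. Qed.

Lemma lam_untouched k (u : VX) : ~~ inGe Js (state own E F Js k).2 u -> lam_k own E F Js k u = lam0 own u.
Proof.
elim: k => [|k IH] // Hn.
have Hn' : ~~ inGe Js (state own E F Js k).2 u.
  apply/negP => /(inGe_mono (nS k)); exact/negP.
by rewrite lamS /upd (negbTE Hn') IH.
Qed.

Lemma upd_le_lam0 lam n (u : VX) : inGe Js n u -> ele (upd own E F Js lam n u) (lam0 own u).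
Proof.
move=> H; rewrite /upd H /lam0; case: ifP => //= _; exact: ele_None.
Qed.

Lemma upd_n_irr lam n m (u : VX) : inGe Js n u -> inGe Js m u ->
  upd own E F Js lam n u = upd own E F Js lam m u.
Proof. by rewrite /upd => -> ->. Qed.

Lemma lam_decr k (u : VX) : ele (lam_k own E F Js k.+1 u) (lam_k own E F Js k u).
Proof.
elim: k u => [|k IH] u.
  rewrite lamS; case: (boolP (inGe Js (state own E F Js 0).2 u)) => H.
    exact: upd_le_lam0.
  by rewrite /upd (negbTE H) ele_refl.
rewrite (lamS k.+1); case: (boolP (inGe Js (state own E F Js k.+1).2 u)) => H; last first.
  by rewrite /upd (negbTE H) ele_refl.
case: (boolP (inGe Js (state own E F Js k).2 u)) => H'.
  rewrite {2}(lamS k) (upd_n_irr _ H H'); exact: upd_mono.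
have -> : lam_k own E F Js k.+1 u = lam0 own u.
  by rewrite lamS /upd (negbTE H') (lam_untouched H').
exact: upd_le_lam0.
Qed.

End Seq.
Section Inv.
Variables (Pi V : finType) (own : V -> Pi) (E : rel V) (F : Pi -> {set V}) (Js : seq {set Pi}).
Local Notation VX := (V * {set Pi})%type.
Local Notation lk := (lam_k own E F Js).

Definition Kc := 1 + #|Pi| * #|V|.
Definition Bc := 2 * #|Pi| + 2.
Definition cnt k (I : {set Pi}) := #|[set v : V | lk k (v, I) != None]|.
Definition rho k (I : {set Pi}) := (#|Pi| - #|I|) * #|V|.+1 + cnt k I.

Lemma cnt_le k I : cnt k I <= #|V|.
Proof. exact: max_card. Qed.

Lemma cnt_mono k I : cnt k I <= cnt k.+1 I.
Proof.
apply: subset_leq_card; apply/subsetP => v; rewrite !inE.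
have := lam_decr own E F Js k (v, I).
by case: (lk k.+1 (v, I)); case: (lk k (v, I)).
Qed.

Lemma rho_lt k (I J : {set Pi}) : I \proper J -> rho k J < rho k I.
Proof.
move=> HIJ; have h1 := proper_card HIJ; have h2 : #|J| <= #|Pi| by exact: max_card.
rewrite /rho; have := cnt_le k J.
have : (#|Pi| - #|J|).+1 * #|V|.+1 <= (#|Pi| - #|I|) * #|V|.+1.
  by rewrite leq_mul2r; apply/orP; right; lia.
rewrite mulSn; lia.
Qed.

Lemma Bc_gt0 : 0 < Bc. Proof. by rewrite /Bc addn2. Qed.

Lemma inv k (u : VX) y : lk k u = Some y -> y + Kc <= Kc * Bc ^ rho k u.2.
Proof.
have pos r : Kc <= Kc * Bc ^ r by rewrite leq_pmulr // expn_gt0 Bc_gt0.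
elim: k u y => [|k IH] u y.
  rewrite /lam_k /= /lam0; case: ifP => // _ [<-]; exact: pos.
case Hold: (lk k u) => [y0|] Hnew.
  have := lam_decr own E F Js k u; rewrite Hnew Hold /= => yy0.
  have h1 := IH _ _ Hold.
  have : Kc * Bc ^ rho k u.2 <= Kc * Bc ^ rho k.+1 u.2.
    rewrite leq_mul2l; apply/orP; right.
    apply: leq_pexp2l; first exact: Bc_gt0.
    rewrite /rho leq_add2l; exact: cnt_mono.
  lia.
move: Hnew; rewrite lamS.
case: (boolP (inGe Js (state own E F Js k).2 u)) => Hg; last by rewrite /upd (negbTE Hg) Hold.
case: (boolP (ownX own u \in u.2)) => Ho.
  by rewrite /upd Hg Ho => -[<-]; exact: pos.
move=> Hu.
set r := rho k u.2.
have HW : forall (w : VX) y', u.2 \subset w.2 -> lk k w = Some y' -> y' <= Kc * Bc ^ r.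
  move=> w y' Hs Hw; have := IH _ _ Hw.
  have : Kc * Bc ^ rho k w.2 <= Kc * Bc ^ r.
    rewrite leq_mul2l; apply/orP; right; apply: leq_pexp2l; first exact: Bc_gt0.
    case: (eqVneq u.2 w.2) => [<-//|ne].
    by apply: ltnW; apply: rho_lt; rewrite properEneq ne Hs.
  lia.
have hy := upd_bound Hg Ho Hu HW.
have hr : r < rho k.+1 u.2.
  rewrite /r /rho ltn_add2l; apply: proper_card; rewrite properEneq; apply/andP; split.
    apply/eqP => Heq; have : u.1 \in [set v : V | lk k.+1 (v, u.2) != None] by rewrite inE -surjective_pairing lamS Hu.
    by rewrite -Heq inE -surjective_pairing Hold.
  apply/subsetP => v; rewrite !inE; have := lam_decr own E F Js k (v, u.2).
  by case: (lk k.+1 (v, u.2)); case: (lk k (v, u.2)).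
have : Kc * Bc ^ r.+1 <= Kc * Bc ^ rho k.+1 u.2.
  rewrite leq_mul2l; apply/orP; right; apply: leq_pexp2l => //; exact: Bc_gt0.
suff : y + Kc <= Kc * Bc ^ r.+1 by lia.
have X1 : 1 <= Bc ^ r by rewrite expn_gt0 Bc_gt0.
move: hy X1; rewrite expnS /Bc /Kc; set X := _ ^ r; set p := #|Pi|; set n := #|V|.
move=> hy X1; nia.
Qed.
End Inv.
Lemma exp_le_base a b e : a <= b -> a ^ e <= b ^ e.
Proof. move=> ab; elim: e => [|e IH] //; rewrite !expnS; exact: leq_mul. Qed.

Lemma card_setT (T : finType) : #|{: {set T}}| = 2 ^ #|T|.
Proof. rewrite -cardsT -card_powerset. apply: eq_card => A. by rewrite !inE subsetT. Qed.

Lemma arith s n p : n <= s -> p <= s -> 1 <= s ->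
  n + p + (1 + p * n + (2 * p + 2) * ((p + 1) * (n + 1)) + 2) * p <= 22 * s ^ 4.
Proof. move=> h1 h2 h3.
apply: leq_trans (_ : s + s + (1 + s * s + (2 * s + 2) * ((s + 1) * (s + 1)) + 2) * s <= _).
  repeat (apply: leq_add || apply: leq_mul) => //; lia.
rewrite !expnS expn0. nia. Qed.

Theorem corollary3p11 :
  exists c k : nat,
  forall (Pi V : finType) (own : V -> Pi) (E : rel V) (F : Pi -> {set V}) (v0 : V)
         (Js : seq {set Pi}) (lamstar : V * {set Pi} -> option nat),
    2 <= #|V| -> #|Pi| <= #|V| -> (forall v, exists v', E v v') ->
    valid_order E F v0 Js ->
    (exists K, forall kk, K <= kk -> forall u, lam_k own E F Js kk u = lamstar u) ->
    csize lamstar = #|V| * 2 ^ #|Pi| * (mR lamstar + 2) ^ #|Pi| /\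
    csize lamstar <= 2 ^ (c * (sizeG E F) ^ k).
Proof.
exists 22, 4 => Pi V own E F v0 Js lamstar HV _ _ _ [K0 HK].
have Hcs : csize lamstar = #|V| * 2 ^ #|Pi| * (mR lamstar + 2) ^ #|Pi|.
  rewrite /csize /CVert !card_prod card_setT card_ffun card_option card_ord.
  by rewrite addn2.
split => //; rewrite Hcs.
set e := (#|Pi| + 1) * (#|V| + 1).
have HmR : mR lamstar <= Kc Pi V * Bc Pi ^ e.
  rewrite /mR; apply/bigmax_leqP => u _.
  case Hu: (lamstar u) => [y|] //.
  have := inv (own := own) (E := E) (F := F) (Js := Js) (k := K0) (u := u) (y := y).
  rewrite HK // => /(_ Hu) h.
  have : Kc Pi V * Bc Pi ^ rho own E F Js K0 u.2 <= Kc Pi V * Bc Pi ^ e.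
    rewrite leq_mul2l; apply/orP; right; apply: leq_pexp2l; first exact: Bc_gt0.
    rewrite /rho /e; have := cnt_le own E F Js K0 u.2.
    have : (#|Pi| - #|u.2|) * #|V|.+1 <= #|Pi| * #|V|.+1 by rewrite leq_mul2r leq_subr orbT.
    rewrite !mulnDl !mulnDr !mul1n !muln1 mulnS; lia.
  move=> h'; exact: leq_trans (leq_trans (leq_addr _ _) h) h'.
set s := sizeG E F.
have hn : #|V| <= s by rewrite /s /sizeG; lia.
have hp : #|Pi| <= s by rewrite /s /sizeG; lia.
have hs : 1 <= s by lia.
set p := #|Pi| in hp HmR *; set n := #|V| in hn HV HmR *.
have h2 (x : nat) : x <= 2 ^ x by apply: ltnW; apply: ltn_expl.
have hM : mR lamstar + 2 <= 2 ^ (Kc Pi V + Bc Pi * e + 2).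
  have : Kc Pi V * Bc Pi ^ e <= 2 ^ (Kc Pi V + Bc Pi * e).
    rewrite expnD expnM; apply: leq_mul; first exact: h2.
    apply: exp_le_base; exact: h2.
  have : 1 <= 2 ^ (Kc Pi V + Bc Pi * e) by rewrite expn_gt0.
  move=> b c; rewrite (expnD 2 _ 2) -[2 ^ 2]/4.
  move: HmR b c; set Y := Kc Pi V * _; set X := 2 ^ (_ + _); lia.
apply: leq_trans (_ : 2 ^ n * 2 ^ p * 2 ^ ((Kc Pi V + Bc Pi * e + 2) * p) <= _).
  apply: leq_mul; first exact: leq_mul (h2 n) (leqnn _).
  by rewrite expnM; apply: exp_le_base.
rewrite -!expnD leq_exp2l //.
rewrite /Kc /Bc /e -/p -/n; exact: arith.
Qed.
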